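(* Let $\nu>2$ and let $F_\nu$ be the CDF of the Student's $t$-distribution with $\nu$ degrees of freedom, location $0$ and scale $1$. For every $t>0$, $$\frac{1}{1-F_\nu(t)}\le\frac{(t^2+\nu)^{\nu/2}}{\kappa},\qquad \kappa=\frac{\Gamma\left(\frac{\nu+1}{2}\right)(\nu-1)}{2\sqrt{\pi}\,\Gamma\left(\frac{\nu}{2}\right)}.$$ *)

(* Defs.v *)
From Stdlib Require Import Reals.
From Coquelicot Require Import Coquelicot.
Open Scope R_scope.

Definition Gamma (s : R) : R :=
  RInt_gen (fun x => Rpower x (s - 1) * exp (- x))
           (at_right 0) (Rbar_locally p_infty).

Definition student_t_pdf (nu x : R) : R :=
  Gamma ((nu + 1) / 2) / (sqrt (nu * PI) * Gamma (nu / 2))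
  * Rpower (1 + x ^ 2 / nu) (- ((nu + 1) / 2)).

Definition student_t_cdf (nu t : R) : R :=
  RInt_gen (student_t_pdf nu) (Rbar_locally m_infty) (at_point t).

(* Main.v *)
Require Import Defs.
From Stdlib Require Import Reals Lra Lia Classical.
From Coquelicot Require Import Coquelicot.
Open Scope R_scope.

Ltac rfield := match goal with |- ?a = ?b => let H := fresh in assert (H : (a:R) = (b:R)) by (unfold Rdiv; field; lra); exact H end.
Ltac rring := match goal with |- ?a = ?b => let H := fresh in assert (H : (a:R) = (b:R)) by ring; exact H end.


Definition qp (b y : R) : R := if Rle_dec y 0 then 0 else Rpower y b.

Lemma qp_pos b y : 0 < y -> qp b y = Rpower y b.
Proof. intros H; unfold qp; destruct (Rle_dec y 0); [lra|reflexivity]. Qed.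

Lemma qp_neg b y : y <= 0 -> qp b y = 0.
Proof. intros H; unfold qp; destruct (Rle_dec y 0); [reflexivity|lra]. Qed.

Lemma qp_ge0 b y : 0 <= qp b y.
Proof. unfold qp; destruct (Rle_dec y 0). lra. unfold Rpower; left; apply exp_pos. Qed.

Lemma cont_of_derive (f : R -> R) x l : is_derive f x l -> continuous f x.
Proof. intros H. apply (ex_derive_continuous (K:=R_AbsRing) (V:=R_NormedModule)). exists l; exact H. Qed.

Lemma qp_cont b y : 0 < b -> continuous (qp b) y.
Proof.
intros Hb.
destruct (Rlt_le_dec 0 y) as [Hy|Hy].
- apply continuous_ext_loc with (fun z => Rpower z b).
  + assert (Hd : 0 < y) by lra.
    exists (mkposreal y Hd). intros z Hz. 
    unfold ball in Hz; simpl in Hz; unfold AbsRing_ball, abs, minus, plus, opp in Hz; simpl in Hz.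
    rewrite qp_pos. reflexivity. apply Rabs_def2 in Hz. lra.
  + apply cont_of_derive with (b * Rpower y (b - 1)).
    apply is_derive_Reals. apply derivable_pt_lim_power. exact Hy.
- destruct Hy as [Hy|Hy].
  + apply continuous_ext_loc with (fun _ => 0).
    * assert (Hd : 0 < - y) by lra.
      exists (mkposreal (-y) Hd). intros z Hz.
      unfold ball in Hz; simpl in Hz; unfold AbsRing_ball, abs, minus, plus, opp in Hz; simpl in Hz.
      rewrite qp_neg. reflexivity. apply Rabs_def2 in Hz. lra.
    * apply continuous_const.
  + subst y. apply filterlim_locally. intros eps.
    assert (Hd : 0 < Rpower eps (/ b)) by (unfold Rpower; apply exp_pos).
    exists (mkposreal _ Hd). intros z Hz.
    unfold ball in Hz |- *; simpl in Hz |- *; unfold AbsRing_ball, abs, minus, plus, opp in Hz |- *; simpl in Hz |- *.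
    rewrite (qp_neg b 0) by lra. rewrite Ropp_0, Rplus_0_r in *.
    destruct (Rle_dec z 0) as [Hz0|Hz0].
    * rewrite qp_neg by lra. rewrite Rabs_R0. apply cond_pos.
    * rewrite qp_pos by lra. rewrite Rabs_pos_eq by (unfold Rpower; left; apply exp_pos).
      rewrite Rabs_pos_eq in Hz by lra.
      apply Rlt_le_trans with (Rpower (Rpower eps (/ b)) b).
      apply Rlt_Rpower_l. lra. lra.
      rewrite Rpower_mult. rewrite Rinv_l by lra. rewrite Rpower_1. lra. apply cond_pos.
Qed.


Lemma ball_R (x : R) (e : R) (y : R) : ball x e y <-> Rabs (y - x) < e.
Proof. unfold ball; simpl; unfold AbsRing_ball, abs, minus, plus, opp; simpl. tauto. Qed.

Lemma cont_delta (f : R -> R) x : continuous f x ->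
  forall eps : posreal, exists d : posreal, forall u, Rabs (u - x) < d -> Rabs (f u - f x) < eps.
Proof.
intros H eps. apply filterlim_locally with (eps := eps) in H.
destruct H as [d Hd]. exists d. intros u Hu. apply ball_R. apply Hd. apply ball_R. exact Hu.
Qed.

Lemma delta_cont (f : R -> R) x :
  (forall eps : posreal, exists d : posreal, forall u, Rabs (u - x) < d -> Rabs (f u - f x) < eps) ->
  continuous f x.
Proof.
intros H. apply filterlim_locally. intros eps. destruct (H eps) as [d Hd].
exists d. intros u Hu. apply ball_R. apply Hd. apply ball_R. exact Hu.
Qed.

Lemma c2_swap h x y : continuity_2d_pt h x y -> continuity_2d_pt (fun u v => h v u) y x.
Proof.
intros H eps. destruct (H eps) as [d Hd]. exists d. intros u v Hu Hv. apply Hd; assumption.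
Qed.

Lemma c2_snd h x y : continuity_2d_pt h x y -> continuous (fun v => h x v) y.
Proof.
intros H. apply delta_cont. intros eps. destruct (H eps) as [d Hd]. exists d. intros u Hu.
apply Hd. unfold Rminus; rewrite Rplus_opp_r, Rabs_R0; apply cond_pos. exact Hu.
Qed.

Lemma c2_fst h x y : continuity_2d_pt h x y -> continuous (fun u => h u y) x.
Proof. intros H. apply (c2_snd (fun u v => h v u)). apply c2_swap. exact H. Qed.

Lemma c2_of_snd (f : R -> R) x y : continuous f y -> continuity_2d_pt (fun _ v => f v) x y.
Proof.
intros H eps. destruct (cont_delta f y H eps) as [d Hd]. exists d. intros u v _ Hv. apply Hd; exact Hv.
Qed.

Lemma c2_of_fst (f : R -> R) x y : continuous f x -> continuity_2d_pt (fun u _ => f u) x y.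
Proof.
intros H eps. destruct (cont_delta f x H eps) as [d Hd]. exists d. intros u v Hu _. apply Hd; exact Hu.
Qed.

Lemma c2_comp (g : R -> R -> R) (f : R -> R) x y :
  continuity_2d_pt g x y -> continuous f (g x y) -> continuity_2d_pt (fun u v => f (g u v)) x y.
Proof.
intros Hg Hf eps. destruct (cont_delta f _ Hf eps) as [d Hd].
destruct (Hg d) as [d2 Hd2]. exists d2. intros u v Hu Hv. apply Hd. apply Hd2; assumption.
Qed.

Section Fubini.
Variable h : R -> R -> R.
Hypothesis Hh : forall x y, continuity_2d_pt h x y.

Lemma h_cont_snd x y : continuous (fun v => h x v) y.
Proof. apply c2_snd, Hh. Qed.
Lemma h_cont_fst x y : continuous (fun u => h u y) x.
Proof. apply c2_fst, Hh. Qed.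

Lemma h_ex_snd x c d : ex_RInt (fun v => h x v) c d.
Proof. apply (ex_RInt_continuous (V:=R_CompleteNormedModule)). intros; apply h_cont_snd. Qed.
Lemma h_ex_fst y a b : ex_RInt (fun u => h u y) a b.
Proof. apply (ex_RInt_continuous (V:=R_CompleteNormedModule)). intros; apply h_cont_fst. Qed.

Lemma PC_aux c d x0 : c <= d -> continuous (fun x => RInt (fun y => h x y) c d) x0.
Proof.
intros Hcd. apply delta_cont. intros eps.
assert (He : 0 < eps / (d - c + 1)). { apply Rdiv_lt_0_compat. apply cond_pos. lra. }
destruct (uniform_continuity_2d_1d (fun y x => h x y) c d x0) with (eps := mkposreal _ He)
  as [del Hdel].
{ intros y _. apply c2_swap. apply Hh. }
exists del. intros u Hu.
change (Rabs (minus (RInt (fun y => h u y) c d) (RInt (fun y => h x0 y) c d)) < eps).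
rewrite <- RInt_minus by apply h_ex_snd.
eapply Rle_lt_trans.
apply abs_RInt_le_const with (M := eps / (d - c + 1)). exact Hcd.
apply @ex_RInt_minus; apply h_ex_snd.
intros t Ht. left. unfold minus, plus, opp; simpl.
apply (Hdel t x0 t u). lra. split; apply Rabs_def2 in Hu; lra. lra. split; apply Rabs_def2 in Hu. lra. lra.
unfold Rminus; rewrite Rplus_opp_r, Rabs_R0. apply cond_pos.
assert (E : (d - c) * (eps / (d - c + 1)) = eps - eps / (d - c + 1)) by (field; lra).
rewrite E. lra.
Qed.

Lemma PC c d x0 : continuous (fun x => RInt (fun y => h x y) c d) x0.
Proof.
destruct (Rle_dec c d) as [H|H]. apply PC_aux; exact H.
apply continuous_ext with (fun x => opp (RInt (fun y => h x y) d c)).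
intros x. apply opp_RInt_swap. apply h_ex_snd.
apply (continuous_opp (fun x => RInt (fun y => h x y) d c)). apply PC_aux. lra.
Qed.

End Fubini.

Section Fubini2.
Variable h : R -> R -> R.
Hypothesis Hh : forall x y, continuity_2d_pt h x y.
Let h_ex_snd := h_ex_snd h Hh.
Let h_cont_snd := h_cont_snd h Hh.

Lemma FTC_h x c u : is_derive (fun u => RInt (fun y => h x y) c u) u (h x u).
Proof.
apply (is_derive_RInt (V:=R_CompleteNormedModule) (fun y => h x y) (fun u => RInt (fun y => h x y) c u) c u).
exists (mkposreal 1 Rlt_0_1). intros b0 _. apply RInt_correct. apply h_ex_snd.
apply h_cont_snd.
Qed.

Lemma Derive_h x c u : Derive (fun u => RInt (fun y => h x y) c u) u = h x u.
Proof. apply is_derive_unique. apply FTC_h. Qed.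

Lemma derive_L a b c u :
  is_derive (fun u => RInt (fun x => RInt (fun y => h x y) c u) a b) u
            (RInt (fun x => h x u) a b).
Proof.
assert (E : RInt (fun x => h x u) a b =
   RInt (fun t => Derive (fun u => RInt (fun y => h t y) c u) u) a b).
{ apply RInt_ext. intros x _. rewrite Derive_h. reflexivity. }
rewrite E.
apply (is_derive_RInt_param (fun u t => RInt (fun y => h t y) c u) a b u).
- exists (mkposreal 1 Rlt_0_1). intros u0 _ t _. exists (h t u0). apply FTC_h.
- intros t _. apply continuity_2d_pt_ext with (fun u v => h v u).
  intros x y. rewrite Derive_h. reflexivity.
  apply c2_swap. apply Hh.
- exists (mkposreal 1 Rlt_0_1). intros y _.
  apply (ex_RInt_continuous (V:=R_CompleteNormedModule)). intros z _. apply (PC h Hh).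
Qed.

Lemma derive_M a b c u :
  is_derive (fun u => RInt (fun y => RInt (fun x => h x y) a b) c u) u
            (RInt (fun x => h x u) a b).
Proof.
apply (is_derive_RInt (V:=R_CompleteNormedModule) (fun y => RInt (fun x => h x y) a b)
   (fun u => RInt (fun y => RInt (fun x => h x y) a b) c u) c u).
exists (mkposreal 1 Rlt_0_1). intros b0 _. apply RInt_correct.
apply (ex_RInt_continuous (V:=R_CompleteNormedModule)). intros z _.
apply (PC (fun x y => h y x)). intros; apply c2_swap, Hh.
apply (PC (fun x y => h y x)). intros; apply c2_swap, Hh.
Qed.

Lemma Fubini_c a b c d :
  RInt (fun x => RInt (fun y => h x y) c d) a b =
  RInt (fun y => RInt (fun x => h x y) a b) c d.
Proof.
set (D := fun u => RInt (fun x => RInt (fun y => h x y) c u) a b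
                 - RInt (fun y => RInt (fun x => h x y) a b) c u).
assert (HD : forall u, is_derive D u zero).
{ intros u. unfold D.
  replace (@zero R_NormedModule) with (RInt (fun x => h x u) a b - RInt (fun x => h x u) a b)
    by (unfold zero; simpl; ring).
  apply (is_derive_minus (K:=R_AbsRing) (V:=R_NormedModule)). apply derive_L. apply derive_M. }
assert (Dc : D c = 0).
{ unfold D. rewrite RInt_point.
  rewrite (RInt_ext (fun x => RInt (fun y => h x y) c c) (fun _ => 0)). rewrite RInt_const. unfold scal, zero; simpl; unfold mult; simpl; ring.
  intros x _. apply (RInt_point (V:=R_CompleteNormedModule)). }
assert (Dd : D d = 0).
{ destruct (Rtotal_order c d) as [H|[H|H]].
  - rewrite <- Dc. symmetry. apply (eq_is_derive D c d). intros; apply HD. exact H.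
  - subst; exact Dc.
  - rewrite <- Dc. apply (eq_is_derive D d c). intros; apply HD. exact H. }
unfold D in Dd. lra.
Qed.

End Fubini2.


Definition gs (t : R) := exp (- (t * t)).

Lemma gs_cont x : continuous gs x.
Proof. apply cont_of_derive with (- 2 * x * gs x). unfold gs. auto_derive. auto. ring. Qed.

Lemma gs_ex a b : ex_RInt gs a b.
Proof. apply (ex_RInt_continuous (V:=R_CompleteNormedModule)). intros; apply gs_cont. Qed.

Lemma gs_pos x : 0 < gs x.
Proof. apply exp_pos. Qed.

Definition fk (u t : R) := exp (- (u * u) * (1 + t * t)) / (1 + t * t).
Definition dfk (u t : R) := - 2 * u * exp (- (u * u) * (1 + t * t)).

Lemma pos1 t : 0 < 1 + t * t.
Proof. nra. Qed.

Lemma fk_der u t : is_derive (fun z => fk z t) u (dfk u t).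
Proof. unfold fk, dfk. auto_derive. pose proof (pos1 t); lra. field. pose proof (pos1 t); lra. Qed.

Lemma dfk_c2 u t : continuity_2d_pt dfk u t.
Proof.
unfold dfk. apply continuity_2d_pt_mult.
apply c2_of_fst. apply cont_of_derive with (-2). auto_derive. auto. ring.
apply (c2_comp (fun u v => - (u * u) * (1 + v * v)) exp).
apply continuity_2d_pt_mult. apply continuity_2d_pt_opp. apply continuity_2d_pt_mult; apply continuity_2d_pt_id1.
apply continuity_2d_pt_plus. apply continuity_2d_pt_const. apply continuity_2d_pt_mult; apply continuity_2d_pt_id2.
apply cont_of_derive with (exp (- (u * u) * (1 + t * t))). auto_derive. auto. ring.
Qed.

Definition G2 (x : R) := RInt (fun t => fk x t) 0 1.
Definition I0 (x : R) := RInt gs 0 x.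

Lemma RInt_lin (f : R -> R) u a b : ex_RInt f (u*a) (u*b) ->
  RInt (fun y => u * f (u*y)) a b = RInt f (u*a) (u*b).
Proof.
intros H.
assert (E := RInt_comp_lin f u 0 a b).
rewrite !Rplus_0_r in E. specialize (E H). rewrite <- E.
apply RInt_ext. intros x _. rewrite Rplus_0_r. reflexivity.
Qed.

Lemma G2_der x : is_derive G2 x (- 2 * gs x * I0 x).
Proof.
unfold G2.
assert (E : - 2 * gs x * I0 x = RInt (fun t => Derive (fun u => fk u t) x) 0 1).
{ rewrite (RInt_ext _ (fun t => dfk x t)).
  2:{ intros t _. apply is_derive_unique. apply fk_der. }
  unfold dfk.
  rewrite (RInt_ext _ (fun t => scal (-2 * gs x) (x * gs (x * t)))).
  2:{ intros t _. unfold gs, scal; simpl; unfold mult; simpl. 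
      replace (- (x * x) * (1 + t * t)) with (- (x * x) + - ((x * t) * (x * t))) by ring.
      rewrite exp_plus. ring. }
  rewrite (RInt_scal (V:=R_CompleteNormedModule)).
  rewrite RInt_lin. rewrite Rmult_0_r, Rmult_1_r. unfold I0, scal; simpl; unfold mult; simpl. reflexivity.
  apply gs_ex.
  apply (ex_RInt_continuous (V:=R_CompleteNormedModule)). intros z _.
  apply cont_of_derive with (Derive (fun t => x * gs (x * t)) z). apply Derive_correct.
  unfold gs. auto_derive. auto. }
rewrite E.
apply (is_derive_RInt_param fk 0 1 x).
- exists (mkposreal 1 Rlt_0_1). intros u0 _ t _. exists (dfk u0 t). apply fk_der.
- intros t _. apply continuity_2d_pt_ext with dfk.
  intros u v. symmetry. apply is_derive_unique. apply fk_der.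
  apply dfk_c2.
- exists (mkposreal 1 Rlt_0_1). intros y _.
  apply (ex_RInt_continuous (V:=R_CompleteNormedModule)). intros z _.
  apply cont_of_derive with (Derive (fun t => fk y t) z). apply Derive_correct. unfold fk. auto_derive.
  pose proof (pos1 z); lra.
Qed.

Lemma I0_der x : is_derive I0 x (gs x).
Proof.
apply (is_derive_RInt (V:=R_CompleteNormedModule) gs I0 0 x).
exists (mkposreal 1 Rlt_0_1). intros b0 _. apply RInt_correct. apply gs_ex.
apply gs_cont.
Qed.

Lemma gauss_sum x : I0 x ^ 2 + G2 x = PI / 4.
Proof.
set (D := fun x => I0 x ^ 2 + G2 x).
assert (HD : forall u, is_derive D u zero).
{ intros u. unfold D.
  replace (@zero R_NormedModule) with (INR 2 * gs u * I0 u ^ 1 + - 2 * gs u * I0 u)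
    by (unfold zero; simpl; ring).
  apply (is_derive_plus (K:=R_AbsRing) (V:=R_NormedModule)).
  apply (is_derive_pow I0 2 u (gs u)). apply I0_der. apply G2_der. }
assert (D0 : D 0 = PI / 4).
{ unfold D, I0, G2. rewrite RInt_point. unfold zero; simpl.
  rewrite (RInt_ext _ (fun t => / (1 + t ^ 2))).
  2:{ intros t _. unfold fk.
      assert (A : exp (- (0 * 0) * (1 + t * t)) / (1 + t * t) = / (1 + t ^ 2)).
      { replace (- (0 * 0) * (1 + t * t)) with 0 by ring. rewrite exp_0. field.
      pose proof (pos1 t); lra. } exact A. }
  rewrite (is_RInt_unique _ 0 1 (atan 1 - atan 0)). rewrite atan_1, atan_0. ring.
  apply (is_RInt_derive (V:=R_CompleteNormedModule) atan).
  intros t _. apply is_derive_Reals. apply derivable_pt_lim_atan.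
  intros t _. apply cont_of_derive with (- (2 * t) / (1 + t ^ 2) ^ 2). auto_derive. nra. field. nra. }
rewrite <- D0. fold (D x).
destruct (Rtotal_order 0 x) as [H|[H|H]].
- symmetry. apply (eq_is_derive D 0 x). intros; apply HD. exact H.
- subst; reflexivity.
- apply (eq_is_derive D x 0). intros; apply HD. exact H.
Qed.

Lemma G2_ge0 x : 0 <= G2 x.
Proof.
unfold G2. apply RInt_ge_0. lra.
apply (ex_RInt_continuous (V:=R_CompleteNormedModule)). intros z _.
apply cont_of_derive with (Derive (fun t => fk x t) z). apply Derive_correct. unfold fk. auto_derive.
pose proof (pos1 z); lra.
intros t _. unfold fk. apply Rlt_le. apply Rdiv_lt_0_compat. apply exp_pos. apply pos1.
Qed.

Lemma I0_le x : I0 x <= sqrt PI / 2.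
Proof.
pose proof (gauss_sum x). pose proof (G2_ge0 x).
pose proof (sqrt_sqrt PI (Rlt_le _ _ PI_RGT_0)). pose proof (sqrt_pos PI).
nra.
Qed.


Lemma ex_cont (f : R -> R) a b : (forall x, continuous f x) -> ex_RInt f a b.
Proof. intros H. apply (ex_RInt_continuous (V:=R_CompleteNormedModule)). intros; apply H. Qed.

Lemma RInt_Chasles_R (f : R -> R) a b c : (forall x, continuous f x) ->
  RInt f a b + RInt f b c = RInt f a c.
Proof. intros H. apply (RInt_Chasles (V:=R_CompleteNormedModule)); apply ex_cont; exact H. Qed.

Lemma RInt_ge0_R (f : R -> R) a b : a <= b -> (forall x, continuous f x) ->
  (forall x, a <= x <= b -> 0 <= f x) -> 0 <= RInt f a b.
Proof. intros Hab H H0. apply RInt_ge_0. exact Hab. apply ex_cont; exact H. intros; apply H0; lra. Qed.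

Lemma RInt_sub_interval (f : R -> R) a a' b' b : a <= a' -> a' <= b' -> b' <= b ->
  (forall x, continuous f x) -> (forall x, a <= x <= b -> 0 <= f x) ->
  RInt f a' b' <= RInt f a b.
Proof.
intros H1 H2 H3 Hc H0.
rewrite <- (RInt_Chasles_R f a a' b) by exact Hc.
rewrite <- (RInt_Chasles_R f a' b' b) by exact Hc.
assert (0 <= RInt f a a') by (apply RInt_ge0_R; auto; intros; apply H0; lra).
assert (0 <= RInt f b' b) by (apply RInt_ge0_R; auto; intros; apply H0; lra).
lra.
Qed.

Lemma RInt_le_R (f g : R -> R) a b : a <= b -> (forall x, continuous f x) -> (forall x, continuous g x) ->
  (forall x, a <= x <= b -> f x <= g x) -> RInt f a b <= RInt g a b.
Proof. intros Hab Hf Hg H. apply RInt_le; auto; try (apply ex_cont; auto). intros; apply H; lra. Qed.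

Lemma gauss_bound A B : A <= B -> RInt gs A B <= sqrt PI.
Proof.
intros HAB. set (X := Rmax (Rabs A) (Rabs B)).
assert (HA : - X <= A) by (unfold X; pose proof (Rmax_l (Rabs A) (Rabs B)); pose proof (Rle_abs (-A)); rewrite Rabs_Ropp in *; lra).
assert (HB : B <= X) by (unfold X; pose proof (Rmax_r (Rabs A) (Rabs B)); pose proof (Rle_abs B); lra).
eapply Rle_trans. apply (RInt_sub_interval gs (-X) A B X); auto. apply gs_cont. intros; left; apply gs_pos.
rewrite <- (RInt_Chasles_R gs (-X) 0 X) by apply gs_cont.
assert (E : RInt gs (-X) 0 = I0 X).
{ unfold I0. 
  assert (E1 := RInt_lin gs (-1) 0 X (gs_ex _ _)).
  rewrite Rmult_0_r in E1.
  replace (-1 * X) with (- X) in E1 by ring.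
  rewrite <- (opp_RInt_swap (V:=R_CompleteNormedModule) gs (-X) 0) in E1 by apply gs_ex.
  rewrite (RInt_ext _ (fun y => opp (gs y))) in E1.
  rewrite (RInt_opp (V:=R_CompleteNormedModule)) in E1 by apply gs_ex.
  unfold opp in E1; simpl in E1. lra.
  intros y _. unfold gs, opp; simpl. replace (-1 * y * (-1 * y)) with (y * y) by ring. ring. }
rewrite E. unfold I0. pose proof (I0_le X). unfold I0 in H. lra.
Qed.



Lemma mono_lim (F : R -> R) (B : R) :
  (forall x y, 0 <= x -> x <= y -> F x <= F y) -> (forall x, 0 <= x -> F x <= B) ->
  exists L, (forall x, 0 <= x -> F x <= L) /\ L <= B /\
    (forall eps, 0 < eps -> exists M, 0 <= M /\ forall x, M <= x -> L - eps < F x).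
Proof.
intros Hm HB.
set (E := fun r => exists x, 0 <= x /\ r = F x).
assert (bE : bound E). { exists B. intros r [x [Hx ->]]. apply HB; exact Hx. }
assert (nE : exists r, E r). { exists (F 0). exists 0. split; [lra|reflexivity]. }
destruct (completeness E bE nE) as [L [HL1 HL2]].
exists L. split; [|split].
- intros x Hx. apply HL1. exists x. split; [exact Hx|reflexivity].
- apply HL2. intros r [x [Hx ->]]. apply HB; exact Hx.
- intros eps Heps.
  destruct (classic (exists x0, 0 <= x0 /\ L - eps < F x0)) as [[x0 [Hx0 Hlt]]|Hno].
  + exists x0. split; [exact Hx0|]. intros x Hx. pose proof (Hm x0 x Hx0 Hx). lra.
  + exfalso. assert (L <= L - eps); [|lra].
    apply HL2. intros r [x [Hx ->]].
    destruct (Rle_dec (F x) (L - eps)) as [H|H]; [exact H|].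
    exfalso; apply Hno; exists x; split; [exact Hx|lra].
Qed.

Lemma ln_le_m1 x : 0 < x -> ln x <= x - 1.
Proof.
intros Hx. rewrite <- (ln_exp (x - 1)). apply ln_le. exact Hx.
pose proof (exp_ineq1_le (x - 1)). lra.
Qed.

Lemma exp_le_exp x y : x <= y -> exp x <= exp y.
Proof. intros [H|H]. left; apply exp_increasing; exact H. subst; lra. Qed.

Lemma gen_0_infty (f g : R -> R) L : (forall x, continuous g x) -> (forall x, 0 < x -> f x = g x) ->
  (forall eps, 0 < eps -> exists d, 0 < d /\ forall a, 0 < a < d -> Rabs (RInt g 0 a) < eps) ->
  (forall eps, 0 < eps -> exists M, forall c, M < c -> Rabs (RInt g 0 c - L) < eps) ->
  is_RInt_gen f (at_right 0) (Rbar_locally p_infty) L.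
Proof.
intros Hc Hfg H0 Hinf.
unfold is_RInt_gen, filterlimi, filter_le, filtermapi.
intros P [eps HP].
assert (He2 : 0 < eps / 2) by (pose proof (cond_pos eps); lra).
destruct (H0 _ He2) as [d [Hd Hd2]].
destruct (Hinf _ He2) as [M HM].
apply Filter_prod with (fun a => 0 < a < d) (fun c => Rmax M 1 < c).
- assert (Hdp : 0 < d) by exact Hd. exists (mkposreal d Hdp). intros x Hx Hx0. apply ball_R in Hx. simpl in Hx.
  split. exact Hx0. apply Rabs_def2 in Hx. unfold minus, plus, opp in Hx; simpl in Hx. lra.
- exists (Rmax M 1). auto.
- intros a c [Ha1 Ha2] Hc1. simpl.
  assert (HM1 := Rmax_l M 1). assert (HM2 := Rmax_r M 1).
  exists (RInt g a c). split.
  + apply (is_RInt_ext (V:=R_NormedModule) g f a c (RInt g a c)).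
    2: exact (RInt_correct (V:=R_CompleteNormedModule) g a c (ex_cont g a c Hc)).
    intros x Hx. symmetry. apply Hfg.
    destruct Hx as [Hx _]. eapply Rle_lt_trans; [|exact Hx]. apply Rmin_glb; lra.
  + apply HP. apply ball_R.
    pose proof (RInt_Chasles_R g 0 a c Hc) as EC.
    replace (RInt g a c) with (RInt g 0 c - RInt g 0 a) by lra.
    specialize (Hd2 a (conj Ha1 Ha2)). specialize (HM c ltac:(lra)).
    apply Rabs_def2 in Hd2. apply Rabs_def2 in HM. apply Rabs_def1; lra.
Qed.

Section GammaSec.
Variable b : R.
Hypothesis Hb : 1 < b.

Definition pg (y : R) := qp (b - 1) y * exp (- y).

Lemma pg_cont y : continuous pg y.
Proof.
unfold pg. apply (continuous_mult (K:=R_AbsRing) (qp (b-1)) (fun y => exp (- y))).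
apply qp_cont; lra.
apply cont_of_derive with (- exp (- y)). auto_derive. auto. ring.
Qed.

Lemma pg_ge0 y : 0 <= pg y.
Proof. unfold pg. apply Rmult_le_pos. apply qp_ge0. left; apply exp_pos. Qed.

Lemma pg_le1 y : y <= 1 -> pg y <= 1.
Proof.
intros Hy. unfold pg. destruct (Rle_dec y 0) as [H|H].
- rewrite qp_neg by exact H. lra.
- rewrite qp_pos by lra.
  assert (Rpower y (b - 1) <= 1).
  { assert (E1 : Rpower 1 (b - 1) = 1) by (unfold Rpower; rewrite ln_1, Rmult_0_r; apply exp_0).
    apply Rle_trans with (Rpower 1 (b - 1)); [apply Rle_Rpower_l; lra | rewrite E1; lra]. }
  assert (exp (- y) <= 1). { rewrite <- exp_0. apply exp_le_exp. lra. }
  assert (0 <= Rpower y (b-1)) by (left; apply exp_pos).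
  assert (0 <= exp (- y)) by (left; apply exp_pos). nra.
Qed.

Definition Cg := exp ((b - 1) * (ln (2 * (b - 1)) - 1)).

Lemma pg_bound y : 0 <= y -> pg y <= Cg * exp (- y / 2).
Proof.
intros Hy. unfold pg. destruct (Rle_dec y 0) as [H|H].
- rewrite qp_neg by exact H. rewrite Rmult_0_l. left; apply Rmult_lt_0_compat; apply exp_pos.
- rewrite qp_pos by lra. unfold Cg, Rpower. rewrite <- !exp_plus. apply exp_le_exp.
  assert (Hy0 : 0 < y) by (apply Rnot_le_lt; exact H).
  set (k := 2 * (b - 1)).
  assert (Hk : 0 < k) by (unfold k; lra).
  assert (E : ln y = ln k + ln (y / k)).
  { rewrite <- ln_mult. f_equal. field. apply Rgt_not_eq; exact Hk. exact Hk. apply Rdiv_lt_0_compat; assumption. }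
  assert (Hl := ln_le_m1 (y / k) (Rdiv_lt_0_compat _ _ Hy0 Hk)).
  assert (HH : (b - 1) * ln y + - y <= (b - 1) * (ln k - 1) + - y / 2).
  { rewrite E. assert ((b - 1) * (y / k) = y / 2) by (unfold k; field; lra).
    assert (0 < b - 1) by lra. nra. }
  exact HH.
Qed.


Definition Pg (Y : R) := RInt pg 0 Y.

Lemma Pg_mono x y : 0 <= x -> x <= y -> Pg x <= Pg y.
Proof.
intros H1 H2. unfold Pg. apply (RInt_sub_interval pg 0 0 x y); try lra. apply pg_cont.
intros; apply pg_ge0.
Qed.

Lemma Pg_ge0 x : 0 <= x -> 0 <= Pg x.
Proof. intros H. unfold Pg. apply RInt_ge0_R. exact H. apply pg_cont. intros; apply pg_ge0. Qed.

Lemma Pg_bound Y : 0 <= Y -> Pg Y <= 2 * Cg.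
Proof.
intros HY. unfold Pg.
assert (Cpos : 0 < Cg) by apply exp_pos.
eapply Rle_trans. apply (RInt_le_R pg (fun y => Cg * exp (- y / 2))). exact HY. apply pg_cont.
intros x. apply cont_of_derive with (Cg * (- / 2 * exp (- x / 2))). auto_derive. auto. rfield.
intros x Hx. apply pg_bound. lra.
rewrite (is_RInt_unique _ 0 Y ((-2 * Cg * exp (- Y / 2)) - (-2 * Cg * exp (- 0 / 2)))).
assert (0 < exp (- Y / 2)) by apply exp_pos.
replace (- 0 / 2) with 0 by field. rewrite exp_0. nra.
apply (is_RInt_derive (V:=R_CompleteNormedModule) (fun y => -2 * Cg * exp (- y / 2))).
intros x _. auto_derive. auto. rfield.
intros x _. apply cont_of_derive with (Cg * (- / 2 * exp (- x / 2))). auto_derive. auto. rfield.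
Qed.

Lemma Pg_small a : 0 <= a <= 1 -> Pg a <= a.
Proof.
intros Ha. unfold Pg. eapply Rle_trans. apply (RInt_le_R pg (fun _ => 1)). lra. apply pg_cont.
intros; apply continuous_const. intros x Hx. apply pg_le1. lra.
rewrite RInt_const. unfold scal; simpl; unfold mult; simpl. lra.
Qed.

Lemma Gamma_char : exists L,
  is_RInt_gen (fun x => Rpower x (b - 1) * exp (- x)) (at_right 0) (Rbar_locally p_infty) L /\
  (forall Y, 0 <= Y -> Pg Y <= L) /\
  (forall eps, 0 < eps -> exists M, 0 <= M /\ forall Y, M <= Y -> L - eps < Pg Y) /\ 0 < L.
Proof.
destruct (mono_lim Pg (2 * Cg) Pg_mono Pg_bound) as [L [H1 [H2 H3]]].
exists L. split; [|split; [exact H1|split; [exact H3|]]].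
- apply (gen_0_infty _ pg).
  + apply pg_cont.
  + intros x Hx. unfold pg. rewrite qp_pos by exact Hx. reflexivity.
  + intros eps Heps. exists (Rmin eps 1). split. apply Rmin_pos; lra.
    intros a Ha. fold (Pg a). rewrite Rabs_pos_eq by (apply Pg_ge0; lra).
    assert (Hm1 := Rmin_l eps 1). assert (Hm2 := Rmin_r eps 1).
    pose proof (Pg_small a ltac:(lra)). lra.
  + intros eps Heps. destruct (H3 eps Heps) as [M [HM0 HM]]. exists M. intros c Hc.
    fold (Pg c). pose proof (HM c ltac:(lra)). pose proof (H1 c ltac:(lra)).
    rewrite Rabs_minus_sym, Rabs_pos_eq; lra.
- apply Rlt_le_trans with (Pg 1). unfold Pg. apply RInt_gt_0. lra.
  intros x Hx. unfold pg. rewrite qp_pos by lra. apply Rmult_lt_0_compat; apply exp_pos.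
  intros; apply pg_cont. apply H1; lra.
Qed.

End GammaSec.



Lemma ex_derive_Rpower c y : 0 < y -> ex_derive (fun x => Rpower x c) y.
Proof. intros H. exists (c * Rpower y (c - 1)). apply is_derive_Reals. apply derivable_pt_lim_power. exact H. Qed.


Section KB.
Variable nu : R.
Hypothesis Hnu : 2 < nu.

Definition sg := (nu + 1) / 2.
Definition ag := nu / 2.

Definition tden (x : R) := Rpower (1 + x ^ 2 / nu) (- ((nu + 1) / 2)).
Definition hh (x y : R) := qp (sg - 1) y * exp (- (y * (1 + x ^ 2 / nu))).

Lemma kpos x : 1 <= 1 + x ^ 2 / nu.
Proof. assert (0 <= x ^ 2 / nu). { apply Rmult_le_pos. nra. left; apply Rinv_0_lt_compat; lra. } lra. Qed.

Lemma gt_cont x : continuous tden x.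
Proof.
unfold tden. apply cont_of_derive with (Derive (fun x => Rpower (1 + x ^ 2 / nu) (- ((nu + 1) / 2))) x).
apply Derive_correct. auto_derive. apply ex_derive_Rpower.
pose proof (kpos x). replace (1 + x * (x * 1) * / nu) with (1 + x ^ 2 / nu) by (unfold Rdiv; ring). lra.
Qed.

Lemma gt_pos x : 0 < tden x.
Proof. unfold tden, Rpower. apply exp_pos. Qed.

Lemma hh_c2 x y : continuity_2d_pt hh x y.
Proof.
unfold hh. apply continuity_2d_pt_mult.
apply c2_of_snd. apply qp_cont. unfold sg; lra.
apply (c2_comp (fun u v => - (v * (1 + u ^ 2 / nu))) exp).
apply continuity_2d_pt_opp. apply continuity_2d_pt_mult. apply continuity_2d_pt_id2.
apply continuity_2d_pt_plus. apply continuity_2d_pt_const.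
apply (c2_of_fst (fun u => u ^ 2 / nu)). apply cont_of_derive with (2 * x / nu). auto_derive. auto. rfield.
apply cont_of_derive with (exp (- (y * (1 + x ^ 2 / nu)))). auto_derive. auto. rfield.
Qed.

Lemma hh_ge0 x y : 0 <= hh x y.
Proof. unfold hh. apply Rmult_le_pos. apply qp_ge0. left; apply exp_pos. Qed.

Lemma hh_cont_y x y : continuous (fun y => hh x y) y.
Proof. apply c2_snd. apply hh_c2. Qed.
Lemma hh_cont_x x y : continuous (fun x => hh x y) x.
Proof. apply c2_fst. apply hh_c2. Qed.

Lemma step1 x Y : 0 <= Y ->
  Pg sg Y * tden x = RInt (fun z => hh x z) 0 (Y / (1 + x ^ 2 / nu)).
Proof.
intros HY. set (k := 1 + x ^ 2 / nu).
assert (Hk : 1 <= k) by apply kpos.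
assert (E1 : Pg sg Y = RInt (fun z => k * pg sg (k * z)) 0 (Y / k)).
{ rewrite RInt_lin. unfold Pg. replace (k * 0) with 0 by ring. replace (k * (Y / k)) with Y by (field; lra). reflexivity.
  apply ex_cont. apply pg_cont. unfold sg; lra. }
assert (E2 : RInt (fun z => k * pg sg (k * z)) 0 (Y / k) = Rpower k sg * RInt (fun z => hh x z) 0 (Y / k)).
{ rewrite <- (RInt_scal (V:=R_CompleteNormedModule)).
  apply RInt_ext. intros z Hz.
  assert (Hz0 : 0 < z). { destruct Hz as [Hz _]. eapply Rle_lt_trans; [|exact Hz]. apply Rmin_glb. lra.
     apply Rmult_le_pos. lra. left; apply Rinv_0_lt_compat; lra. }
  unfold pg, hh, scal; simpl; unfold mult; simpl.
  rewrite !qp_pos by nra.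
  rewrite <- Rpower_mult_distr by lra.
  fold k.
  replace (- (k * z)) with (- (z * k)) by ring.
  assert (Rpower k sg = k * Rpower k (sg - 1)).
  { replace sg with (1 + (sg - 1)) at 1 by ring. rewrite Rpower_plus. rewrite Rpower_1 by lra. reflexivity. }
  rewrite H. unfold k. replace (x * (x * 1)) with (x ^ 2) by ring. rring.
  apply ex_cont. apply hh_cont_y. }
rewrite E1, E2. unfold tden. fold k.
replace (- ((nu + 1) / 2)) with (- sg) by (unfold sg; ring).
rewrite Rpower_Ropp.
field. unfold Rpower; apply Rgt_not_eq; apply exp_pos.
Qed.

Lemma gt_le1 x : tden x <= 1.
Proof.
unfold tden. apply Rle_trans with (Rpower (1 + x ^ 2 / nu) 0).
apply Rle_Rpower. apply kpos. lra.
rewrite Rpower_O. lra. pose proof (kpos x); lra.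
Qed.

Lemma hh_ex_y x c d : ex_RInt (fun y => hh x y) c d.
Proof. apply ex_cont. apply hh_cont_y. Qed.

Lemma step1b Ls x Y : 0 <= Y -> Pg sg Y <= Ls ->
  Ls * tden x <= RInt (fun y => hh x y) 0 Y + (Ls - Pg sg Y).
Proof.
intros HY HL.
assert (Hk := kpos x).
replace (Ls * tden x) with (Pg sg Y * tden x + (Ls - Pg sg Y) * tden x) by ring.
rewrite step1 by exact HY.
assert (RInt (fun z => hh x z) 0 (Y / (1 + x ^ 2 / nu)) <= RInt (fun z => hh x z) 0 Y).
{ apply RInt_sub_interval. lra. apply Rmult_le_pos. lra. left; apply Rinv_0_lt_compat; lra.
  apply Rmult_le_reg_r with (1 + x ^ 2 / nu). lra. unfold Rdiv; rewrite Rmult_assoc, Rinv_l by lra. nra.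
  apply hh_cont_y. intros; apply hh_ge0. }
assert ((Ls - Pg sg Y) * tden x <= Ls - Pg sg Y).
{ pose proof (gt_le1 x). pose proof (gt_pos x). nra. }
lra.
Qed.

Lemma step4 A B y : A <= B -> 0 <= y ->
  RInt (fun x => hh x y) A B <= sqrt nu * sqrt PI * pg ag y.
Proof.
intros HAB Hy.
assert (Hpg : 0 <= pg ag y) by apply pg_ge0.
assert (0 <= sqrt nu * sqrt PI) by (apply Rmult_le_pos; apply sqrt_pos).
destruct Hy as [Hy|Hy].
2:{ subst y. rewrite (RInt_ext _ (fun _ => 0)). rewrite RInt_const. unfold scal; simpl; unfold mult; simpl.
    rewrite Rmult_0_r. nra.
    intros x _. unfold hh. rewrite qp_neg by lra. rring. }
set (r := sqrt (y / nu)).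
assert (Hyn : 0 < y / nu) by (apply Rdiv_lt_0_compat; lra).
assert (Hr : 0 < r) by (apply sqrt_lt_R0; exact Hyn).
assert (Er : r * r = y / nu) by (apply sqrt_sqrt; lra).
set (C := qp (sg - 1) y * exp (- y)).
assert (HC : 0 <= C) by (apply Rmult_le_pos; [apply qp_ge0|left; apply exp_pos]).
assert (E1 : RInt (fun x => hh x y) A B = C * RInt (fun x => gs (r * x)) A B).
{ rewrite <- (RInt_scal (V:=R_CompleteNormedModule)).
  apply RInt_ext. intros x _. unfold hh, C, gs, scal; simpl; unfold mult; simpl.
  rewrite Rmult_assoc. f_equal. rewrite <- exp_plus. f_equal.
  replace (r * x * (r * x)) with ((r * r) * x ^ 2) by ring. rewrite Er. field. lra.
  apply ex_cont. intros z. apply continuous_comp.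
  apply cont_of_derive with r. auto_derive. auto. rring. apply gs_cont. }
assert (E2 : RInt (fun x => gs (r * x)) A B = / r * RInt gs (r * A) (r * B)).
{ rewrite <- RInt_lin. rewrite <- (RInt_scal (V:=R_CompleteNormedModule)).
  apply RInt_ext. intros x _. unfold scal; simpl; unfold mult; simpl. field. lra.
  apply ex_cont. intros z. apply (continuous_mult (K:=R_AbsRing) (fun _ => r) (fun z => gs (r * z))).
  apply continuous_const. apply continuous_comp.
  apply cont_of_derive with r. auto_derive. auto. rring. apply gs_cont.
  apply gs_ex. }
rewrite E1, E2.
assert (HG := gauss_bound (r * A) (r * B) ltac:(nra)).
assert (E3 : C * / r = sqrt nu * pg ag y).
{ unfold C, pg, r. rewrite !qp_pos by lra.
  rewrite sqrt_div_alt by lra.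
  rewrite <- (Rpower_sqrt y) by lra.
  assert (Rpower y (sg - 1) = Rpower y (ag - 1) * Rpower y (/ 2)).
  { rewrite <- Rpower_plus. f_equal. unfold sg, ag. field. }
  rewrite H0. field. split. apply Rgt_not_eq. apply sqrt_lt_R0; lra.
  unfold Rpower; apply Rgt_not_eq; apply exp_pos. }
assert (0 < / r) by (apply Rinv_0_lt_compat; exact Hr).
apply Rle_trans with (C * (/ r * sqrt PI)).
apply Rmult_le_compat_l. exact HC. apply Rmult_le_compat_l. lra. exact HG.
replace (C * (/ r * sqrt PI)) with ((C * / r) * sqrt PI) by ring. rewrite E3. lra.
Qed.

Lemma KB_Y A B Ls La Y : A <= B -> 0 <= Y ->
  (forall Y, 0 <= Y -> Pg sg Y <= Ls) ->
  (forall Y, 0 <= Y -> Pg ag Y <= La) ->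
  Ls * RInt tden A B <= sqrt nu * sqrt PI * La + (B - A) * (Ls - Pg sg Y).
Proof.
intros HAB HY HLs HLa.
assert (HPC : forall x, continuous (fun x => RInt (fun y => hh x y) 0 Y) x).
{ intros x. apply (PC hh hh_c2). }
assert (HPC2 : forall y, continuous (fun y => RInt (fun x => hh x y) A B) y).
{ intros y. apply (PC (fun y x => hh x y)). intros; apply c2_swap, hh_c2. }
assert (S1 : Ls * RInt tden A B <= RInt (fun x => RInt (fun y => hh x y) 0 Y + (Ls - Pg sg Y)) A B).
{ rewrite <- (RInt_scal (V:=R_CompleteNormedModule)) by (apply ex_cont; apply gt_cont).
  apply RInt_le_R. exact HAB.
  intros x. apply (continuous_scal_r (K:=R_AbsRing) (V:=R_NormedModule) Ls tden). apply gt_cont.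
  intros x. apply (continuous_plus (V:=R_NormedModule) (fun x => RInt (fun y => hh x y) 0 Y) (fun _ => Ls - Pg sg Y)).
  apply HPC. apply continuous_const.
  intros x _. unfold scal; simpl; unfold mult; simpl. apply step1b. exact HY. apply HLs; exact HY. }
assert (S2 : RInt (fun x => RInt (fun y => hh x y) 0 Y + (Ls - Pg sg Y)) A B =
   RInt (fun y => RInt (fun x => hh x y) A B) 0 Y + (B - A) * (Ls - Pg sg Y)).
{ rewrite (RInt_plus (V:=R_CompleteNormedModule) (fun x => RInt (fun y => hh x y) 0 Y) (fun _ => Ls - Pg sg Y)).
  rewrite RInt_const. rewrite (Fubini_c hh hh_c2). unfold plus, scal; simpl; unfold mult; simpl. reflexivity.
  apply ex_cont; exact HPC. apply ex_cont. intros; apply continuous_const. }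
assert (S3 : RInt (fun y => RInt (fun x => hh x y) A B) 0 Y <= sqrt nu * sqrt PI * Pg ag Y).
{ unfold Pg. rewrite <- (RInt_scal (V:=R_CompleteNormedModule)) by (apply ex_cont; apply pg_cont; unfold ag; lra).
  apply RInt_le_R. exact HY. exact HPC2.
  intros y. apply (continuous_scal_r (K:=R_AbsRing) (V:=R_NormedModule) (sqrt nu * sqrt PI) (pg ag)). apply pg_cont; unfold ag; lra.
  intros y Hy. unfold scal; simpl; unfold mult; simpl. apply step4. exact HAB. lra. }
assert (0 <= sqrt nu * sqrt PI) by (apply Rmult_le_pos; apply sqrt_pos).
pose proof (HLa Y HY).
nra.
Qed.

Lemma KB A B Ls La : A <= B ->
  (forall Y, 0 <= Y -> Pg sg Y <= Ls) ->
  (forall eps, 0 < eps -> exists M, 0 <= M /\ forall Y, M <= Y -> Ls - eps < Pg sg Y) ->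
  (forall Y, 0 <= Y -> Pg ag Y <= La) ->
  Ls * RInt tden A B <= sqrt nu * sqrt PI * La.
Proof.
intros HAB HLs Hcv HLa.
destruct (Rle_dec (Ls * RInt tden A B) (sqrt nu * sqrt PI * La)) as [H|H]; [exact H|].
exfalso. apply Rnot_le_lt in H.
set (gap := Ls * RInt tden A B - sqrt nu * sqrt PI * La).
assert (Hg : 0 < gap) by (unfold gap; lra).
destruct (Hcv (gap / (B - A + 1))) as [M [HM0 HM]]. apply Rdiv_lt_0_compat; lra.
pose proof (KB_Y A B Ls La M HAB HM0 HLs HLa) as K.
pose proof (HM M (Rle_refl M)) as K2.
pose proof (HLs M HM0) as K3.
assert ((B - A) * (Ls - Pg sg M) < gap).
{ apply Rle_lt_trans with ((B - A) * (gap / (B - A + 1))).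
  apply Rmult_le_compat_l; lra.
  replace ((B - A) * (gap / (B - A + 1))) with (gap - gap / (B - A + 1)) by (field; lra).
  assert (0 < gap / (B - A + 1)) by (apply Rdiv_lt_0_compat; lra). lra. }
unfold gap in *. lra.
Qed.

End KB.



Lemma is_derive_Rpow2 (nu p x : R) : 0 < nu ->
  is_derive (fun x => Rpower (x ^ 2 + nu) p) x (p * Rpower (x ^ 2 + nu) (p - 1) * (2 * x)).
Proof.
intros Hnu.
assert (H : is_derive (fun x => Rpower x p) (x ^ 2 + nu) (p * Rpower (x ^ 2 + nu) (p - 1))).
{ apply is_derive_Reals. apply derivable_pt_lim_power. nra. }
assert (H2 : is_derive (fun x => x ^ 2 + nu) x (2 * x)).
{ auto_derive. auto. rring. }
pose proof (is_derive_comp (fun x => Rpower x p) (fun x => x ^ 2 + nu) x _ _ H H2) as H3.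
replace (p * Rpower (x ^ 2 + nu) (p - 1) * (2 * x)) with (scal (2 * x) (p * Rpower (x ^ 2 + nu) (p - 1))).
exact H3. unfold scal; simpl; unfold mult; simpl. ring.
Qed.

Section Tail.
Variable nu : R.
Hypothesis Hnu : 2 < nu.

Definition ww (x : R) := Rpower nu (sg nu) * x * Rpower (x ^ 2 + nu) (- (sg nu + / 2)).
Definition WW (x : R) := - (Rpower nu (sg nu) / nu) * Rpower (x ^ 2 + nu) (- (nu / 2)).

Lemma WW_der x : is_derive WW x (ww x).
Proof.
unfold WW, ww.
assert (H := is_derive_Rpow2 nu (- (nu / 2)) x ltac:(lra)).
apply (is_derive_scal _ x (- (Rpower nu (sg nu) / nu))) in H.
replace (- (sg nu + / 2)) with (- (nu / 2) - 1) by (unfold sg; field).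
replace (Rpower nu (sg nu) * x * Rpower (x ^ 2 + nu) (- (nu / 2) - 1)) with
  (- (Rpower nu (sg nu) / nu) * (- (nu / 2) * Rpower (x ^ 2 + nu) (- (nu / 2) - 1) * (2 * x))).
exact H.
field. lra.
Qed.

Lemma ww_cont x : continuous ww x.
Proof.
unfold ww. apply cont_of_derive with (Derive ww x). apply Derive_correct. unfold ww.
apply ex_derive_mult. auto_derive; auto.
exists (- (sg nu + / 2) * Rpower (x ^ 2 + nu) (- (sg nu + / 2) - 1) * (2 * x)). apply is_derive_Rpow2. lra.
Qed.

Lemma gt_alt x : tden nu x = Rpower nu (sg nu) * Rpower (x ^ 2 + nu) (- sg nu).
Proof.
unfold tden, sg.
replace (1 + x ^ 2 / nu) with ((x ^ 2 + nu) * / nu) by (field; lra).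
rewrite <- Rpower_mult_distr. rewrite Rpower_Ropp. rewrite Rpower_Ropp.
replace (Rpower (/ nu) ((nu + 1) / 2)) with (/ Rpower nu ((nu + 1) / 2)).
field. split; unfold Rpower; apply Rgt_not_eq; apply exp_pos.
unfold Rpower. rewrite ln_Rinv by lra. rewrite <- exp_Ropp. f_equal. ring.
nra. apply Rinv_0_lt_compat; lra.
Qed.

Lemma ww_le x : 0 <= x -> ww x <= tden nu x.
Proof.
intros Hx. rewrite gt_alt. unfold ww.
assert (Hz : 0 < x ^ 2 + nu) by nra.
rewrite Rmult_assoc. apply Rmult_le_compat_l. left; unfold Rpower; apply exp_pos.
replace (- (sg nu + / 2)) with (- sg nu + - / 2) by ring. rewrite Rpower_plus.
rewrite (Rpower_Ropp (x ^ 2 + nu) (/ 2)). rewrite Rpower_sqrt by exact Hz.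
assert (Hs : x <= sqrt (x ^ 2 + nu)).
{ rewrite <- (sqrt_pow2 x Hx) at 1. apply sqrt_le_1_alt. lra. }
assert (Hs0 : 0 < sqrt (x ^ 2 + nu)) by (apply sqrt_lt_R0; exact Hz).
assert (HP : 0 < Rpower (x ^ 2 + nu) (- sg nu)) by (unfold Rpower; apply exp_pos).
replace (x * (Rpower (x ^ 2 + nu) (- sg nu) * / sqrt (x ^ 2 + nu))) with
   (Rpower (x ^ 2 + nu) (- sg nu) * (x / sqrt (x ^ 2 + nu))) by (field; lra).
rewrite <- (Rmult_1_r (Rpower (x ^ 2 + nu) (- sg nu))) at 2.
apply Rmult_le_compat_l. lra.
apply Rmult_le_reg_r with (sqrt (x ^ 2 + nu)). exact Hs0.
unfold Rdiv. rewrite Rmult_assoc, Rinv_l by lra. lra.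
Qed.

Lemma tail_lower T M : 0 <= T -> T <= M ->
  WW M - WW T <= RInt (tden nu) T M.
Proof.
intros HT HM.
rewrite <- (is_RInt_unique ww T M (WW M - WW T)).
apply RInt_le_R. exact HM. apply ww_cont. apply gt_cont; lra.
intros x Hx. apply ww_le. lra.
apply (is_RInt_derive (V:=R_CompleteNormedModule) WW ww).
intros x _. apply WW_der. intros x _. apply ww_cont.
Qed.

End Tail.



Lemma pow_ineq nu : 2 < nu -> (nu - 1) / 2 <= Rpower nu (nu / 2 - 1).
Proof.
intros H. unfold Rpower.
pose proof (exp_ineq1_le ((nu / 2 - 1) * ln nu)).
assert (Hl : 0 < ln nu). { rewrite <- ln_1. apply ln_increasing; lra. }
destruct (Rle_dec nu 3) as [H3|H3].
- assert (0 <= (nu / 2 - 1) * ln nu) by (apply Rmult_le_pos; lra). lra.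
- assert (Hl3 : 1 <= ln nu).
  { rewrite <- (ln_exp 1). apply ln_le. apply exp_pos. pose proof exp_le_3. lra. }
  assert ((nu / 2 - 1) * 1 <= (nu / 2 - 1) * ln nu) by (apply Rmult_le_compat_l; lra). lra.
Qed.

Lemma Rpower_le_inv z p : 1 <= z -> p <= -1 -> Rpower z p <= / z.
Proof.
intros Hz Hp. rewrite <- (Rpower_1 z) at 2 by lra. rewrite <- Rpower_Ropp.
apply Rle_Rpower; lra.
Qed.

Theorem corollary3 (nu t : R) (hnu : 2 < nu) (ht : 0 < t) :
  1 / (1 - student_t_cdf nu t)
  <= Rpower (t ^ 2 + nu) (nu / 2)
     / (Gamma ((nu + 1) / 2) * (nu - 1) / (2 * sqrt PI * Gamma (nu / 2))).
Proof.
assert (Hs : 1 < sg nu) by (unfold sg; lra).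
assert (Ha : 1 < ag nu) by (unfold ag; lra).
destruct (Gamma_char (sg nu) Hs) as [Ls [HLsI [HLs [Hcv Ls0]]]].
destruct (Gamma_char (ag nu) Ha) as [La [HLaI [HLa [_ La0]]]].
assert (GLs : Gamma ((nu + 1) / 2) = Ls).
{ unfold Gamma. apply is_RInt_gen_unique. exact HLsI. }
assert (GLa : Gamma (nu / 2) = La).
{ unfold Gamma. apply is_RInt_gen_unique. exact HLaI. }
assert (HsPI : sqrt (nu * PI) = sqrt nu * sqrt PI).
{ apply sqrt_mult. lra. left; apply PI_RGT_0. }
assert (Hsn : 0 < sqrt nu) by (apply sqrt_lt_R0; lra).
assert (HsP : 0 < sqrt PI) by (apply sqrt_lt_R0; apply PI_RGT_0).
set (c := Ls / (sqrt (nu * PI) * La)).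
assert (Hc : 0 < c).
{ unfold c. rewrite HsPI. apply Rdiv_lt_0_compat. lra. apply Rmult_lt_0_compat; [|lra]. nra. }
assert (Hpdf : forall x, student_t_pdf nu x = c * tden nu x).
{ intros x. unfold student_t_pdf, c, tden. rewrite GLs, GLa. reflexivity. }
assert (pdf_cont : forall x, continuous (student_t_pdf nu) x).
{ intros x. apply continuous_ext with (fun x => c * tden nu x). intros; symmetry; apply Hpdf.
  apply (continuous_scal_r (K:=R_AbsRing) (V:=R_NormedModule) c (tden nu)). apply gt_cont. lra. }
assert (pdf_ge0 : forall x, 0 <= student_t_pdf nu x).
{ intros x. rewrite Hpdf. apply Rmult_le_pos. lra. left; apply gt_pos. }
assert (RIpdf : forall a b, RInt (student_t_pdf nu) a b = c * RInt (tden nu) a b).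
{ intros a b. rewrite (RInt_ext _ (fun x => scal c (tden nu x))).
  apply (RInt_scal (V:=R_CompleteNormedModule)). apply ex_cont. apply gt_cont; lra.
  intros x _. rewrite Hpdf. reflexivity. }
assert (KB1 : forall A B, A <= B -> c * RInt (tden nu) A B <= 1).
{ intros A B HAB. pose proof (KB nu hnu A B Ls La HAB HLs Hcv HLa) as K.
  unfold c. rewrite HsPI.
  assert (0 < sqrt nu * sqrt PI * La) by (apply Rmult_lt_0_compat; [nra|lra]).
  replace (Ls / (sqrt nu * sqrt PI * La) * RInt (tden nu) A B) with
     ((Ls * RInt (tden nu) A B) / (sqrt nu * sqrt PI * La)) by (field; lra).
  apply Rmult_le_reg_r with (sqrt nu * sqrt PI * La). exact H.
  unfold Rdiv. rewrite Rmult_assoc, Rinv_l by lra. lra. }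
set (Hf := fun Y => RInt (student_t_pdf nu) (t - Y) t).
assert (Hf_mono : forall x y, 0 <= x -> x <= y -> Hf x <= Hf y).
{ intros x y Hx Hxy. unfold Hf. apply (RInt_sub_interval _ (t - y) (t - x) t t); try lra.
  exact pdf_cont. intros; apply pdf_ge0. }
assert (Hf_bd : forall x, 0 <= x -> Hf x <= 1).
{ intros x Hx. unfold Hf. rewrite RIpdf. apply KB1. lra. }
destruct (mono_lim Hf 1 Hf_mono Hf_bd) as [LF [HLF1 [HLF2 HLF3]]].
assert (Hcdf : student_t_cdf nu t = LF).
{ unfold student_t_cdf. apply is_RInt_gen_unique.
  unfold is_RInt_gen, filterlimi, filter_le, filtermapi.
  intros P [eps HP].
  destruct (HLF3 eps (cond_pos eps)) as [M [HM0 HM]].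
  apply Filter_prod with (fun a => a < t - M) (fun b => b = t).
  - exists (t - M). auto.
  - reflexivity.
  - intros a b Ha' Hb. simpl. subst b.
    exists (RInt (student_t_pdf nu) a t). split.
    + apply (RInt_correct (V:=R_CompleteNormedModule)). apply ex_cont; exact pdf_cont.
    + apply HP. apply ball_R.
      assert (E : RInt (student_t_pdf nu) a t = Hf (t - a)) by (unfold Hf; f_equal; ring).
      rewrite E. pose proof (HM (t - a) ltac:(lra)). pose proof (HLF1 (t - a) ltac:(lra)).
      apply Rabs_def1; lra. }
assert (Key : forall M, t <= M -> LF + c * RInt (tden nu) t M <= 1).
{ intros M HtM.
  destruct (Rle_dec (LF + c * RInt (tden nu) t M) 1) as [H|H]; [exact H|]. exfalso.
  apply Rnot_le_lt in H.
  destruct (HLF3 (LF + c * RInt (tden nu) t M - 1) ltac:(lra)) as [Y [HY0 HY]].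
  specialize (HY Y (Rle_refl Y)).
  pose proof (KB1 (t - Y) M ltac:(lra)) as K.
  rewrite <- (RInt_Chasles_R (tden nu) (t - Y) t M) in K by (intros; apply gt_cont; lra).
  unfold Hf in HY. rewrite RIpdf in HY. lra. }
set (K0 := c * (Rpower nu (sg nu) / nu)).
assert (HK0 : 0 < K0).
{ unfold K0. apply Rmult_lt_0_compat. exact Hc. apply Rdiv_lt_0_compat. unfold Rpower; apply exp_pos. lra. }
assert (Low : K0 * Rpower (t ^ 2 + nu) (- (nu / 2)) <= 1 - LF).
{ destruct (Rle_dec (K0 * Rpower (t ^ 2 + nu) (- (nu / 2))) (1 - LF)) as [H|H]; [exact H|]. exfalso.
  apply Rnot_le_lt in H.
  set (gap := K0 * Rpower (t ^ 2 + nu) (- (nu / 2)) - (1 - LF)).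
  assert (Hg : 0 < gap) by (unfold gap; lra).
  set (M := t + 1 + K0 / gap).
  assert (HM1 : 1 <= M). { unfold M. assert (0 < K0 / gap) by (apply Rdiv_lt_0_compat; lra). lra. }
  assert (HtM : t <= M). { unfold M. assert (0 < K0 / gap) by (apply Rdiv_lt_0_compat; lra). lra. }
  pose proof (Key M HtM) as K1.
  pose proof (tail_lower nu hnu t M ltac:(lra) HtM) as K2.
  assert (K3 : c * (WW nu M - WW nu t) <= 1 - LF).
  { apply Rmult_le_compat_l with (r := c) in K2; lra. }
  unfold WW in K3.
  assert (E : c * (- (Rpower nu (sg nu) / nu) * Rpower (M ^ 2 + nu) (- (nu / 2)) -
     - (Rpower nu (sg nu) / nu) * Rpower (t ^ 2 + nu) (- (nu / 2))) =
     K0 * Rpower (t ^ 2 + nu) (- (nu / 2)) - K0 * Rpower (M ^ 2 + nu) (- (nu / 2))) by (unfold K0; ring).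
  rewrite E in K3.
  assert (K4 : Rpower (M ^ 2 + nu) (- (nu / 2)) <= / M).
  { eapply Rle_trans. apply Rpower_le_inv. nra. lra.
    apply Rinv_le_contravar. lra. nra. }
  assert (K5 : K0 * / M < gap).
  { apply Rmult_lt_reg_r with M. lra. rewrite Rmult_assoc, Rinv_l by lra.
    unfold M. apply Rle_lt_trans with (gap * (K0 / gap)). right; field; lra.
    assert (0 < K0 / gap) by (apply Rdiv_lt_0_compat; lra). nra. }
  assert (K0 * Rpower (M ^ 2 + nu) (- (nu / 2)) <= K0 * / M) by (apply Rmult_le_compat_l; lra).
  unfold gap in K5. lra. }
set (A := Rpower (t ^ 2 + nu) (nu / 2)).
assert (HA : 0 < A) by (unfold A, Rpower; apply exp_pos).
assert (EA : Rpower (t ^ 2 + nu) (- (nu / 2)) = / A) by (unfold A; apply Rpower_Ropp).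
rewrite EA in Low.
rewrite Hcdf, GLs, GLa.
set (kap := Ls * (nu - 1) / (2 * sqrt PI * La)).
assert (Hkap : 0 < kap) by (unfold kap; apply Rdiv_lt_0_compat; [nra|nra]).
assert (Hkk : kap <= K0).
{ unfold kap, K0, c. rewrite HsPI.
  assert (Ep : Rpower nu (sg nu) / nu = sqrt nu * Rpower nu (nu / 2 - 1)).
  { assert (Hi : / nu = Rpower nu (- (1))) by (rewrite Rpower_Ropp, Rpower_1; lra).
    unfold Rdiv. rewrite Hi. rewrite <- Rpower_sqrt by lra. rewrite <- !Rpower_plus. f_equal. unfold sg. field. }
  rewrite Ep. pose proof (pow_ineq nu hnu) as Pi.
  replace (Ls / (sqrt nu * sqrt PI * La) * (sqrt nu * Rpower nu (nu / 2 - 1))) with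
     (Ls / (sqrt PI * La) * Rpower nu (nu / 2 - 1)) by (field; lra).
  replace (Ls * (nu - 1) / (2 * sqrt PI * La)) with (Ls / (sqrt PI * La) * ((nu - 1) / 2)) by (field; lra).
  apply Rmult_le_compat_l. apply Rlt_le. apply Rdiv_lt_0_compat; nra. exact Pi. }
assert (Hlow : kap / A <= 1 - LF).
{ eapply Rle_trans; [|exact Low]. unfold Rdiv. apply Rmult_le_compat_r. left; apply Rinv_0_lt_compat; lra. exact Hkk. }
assert (Hpos : 0 < kap / A) by (apply Rdiv_lt_0_compat; lra).
fold kap.
replace (A / kap) with (1 / (kap / A)) by (field; lra).
unfold Rdiv. rewrite !Rmult_1_l. apply Rinv_le_contravar; lra.
Qed.
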